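(* Let $\mathbf x_1,\ldots,\mathbf x_n\in\mathbb{R}^d\setminus\{\mathbf 0\}$, with $x_{ij}$ the $j$-th coordinate of $\mathbf x_i$, and let $\pi(\beta)\propto\prod_{i=1}^n\frac{1}{1+\exp(\mathbf x_i^T\beta)}$ be the (assumed proper) logit posterior under a flat prior. For $j=1,\ldots,d$ let $$z_j(\beta)=\frac12\sum_{i=1}^n x_{ij}\frac{\exp(\mathbf x_i^T\beta)}{1+\exp(\mathbf x_i^T\beta)}.$$ Then for every $\delta>0$ and every $j$, $\mathbb{E}_\pi[|z_j|^{2+\delta}]<\infty$.
   Context: The $z_j$ are the control variates $-\frac12\partial_{\beta_j}\ln\pi$ of the zero-variance method with linear trial polynomial, for a logit model in which all responses are $0$. *)

(* Defs.v *)
From HB Require Import structures.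
From mathcomp Require Import all_boot all_order all_algebra.
From mathcomp Require Import all_classical all_reals all_analysis.
Set Implicit Arguments. Unset Strict Implicit. Unset Printing Implicit Defensive.
Import Order.TTheory GRing.Theory Num.Theory.
Local Open Scope ring_scope.
Local Open Scope classical_set_scope.

(* R^d is modelled as d.-tuple R, with its product (= Borel) sigma-algebra. *)

(* Flat prior: mu is Lebesgue measure on R^d, characterized by its values on
   closed boxes [a_1,b_1] x ... x [a_d,b_d]. *)
Definition is_lebesgue_Rd (R : realType) (d : nat)
  (mu : {measure set (d.-tuple R) -> \bar R}) : Prop :=
  forall a b : d.-tuple R, (forall k, tnth a k <= tnth b k) ->
    mu [set v | forall k, tnth a k <= tnth v k <= tnth b k]
    = (\prod_(k < d) (tnth b k - tnth a k))%:E.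

Definition dotR (R : realType) (d : nat) (u v : d.-tuple R) : R :=
  \sum_(k < d) tnth u k * tnth v k.

(* unnormalized logit posterior (all responses 0, flat prior):
   prod_i 1/(1+exp(x_i^T beta)) *)
Definition logit_lik (R : realType) (d n : nat) (x : 'I_n -> d.-tuple R)
  (beta : d.-tuple R) : R :=
  \prod_(i < n) (1 + expR (dotR (x i) beta))^-1.

Definition logit_Z (R : realType) (d n : nat)
  (mu : {measure set (d.-tuple R) -> \bar R}) (x : 'I_n -> d.-tuple R) : R :=
  fine (\int[mu]_beta (logit_lik x beta)%:E)%E.

Definition logit_post (R : realType) (d n : nat)
  (mu : {measure set (d.-tuple R) -> \bar R}) (x : 'I_n -> d.-tuple R)
  (beta : d.-tuple R) : R :=
  logit_lik x beta / logit_Z mu x.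

Definition zcv (R : realType) (d n : nat) (x : 'I_n -> d.-tuple R)
  (j : 'I_d) (beta : d.-tuple R) : R :=
  2^-1 * \sum_(i < n) tnth (x i) j *
     (expR (dotR (x i) beta) / (1 + expR (dotR (x i) beta))).

(* Main.v *)
Require Import Defs.
From HB Require Import structures.
From mathcomp Require Import all_boot all_order all_algebra.
From mathcomp Require Import all_classical all_reals all_analysis.
From mathcomp Require Import measurable_realfun.
Import Order.TTheory GRing.Theory Num.Theory.
Import numFieldNormedType.Exports.
Local Open Scope ring_scope.
Local Open Scope classical_set_scope.

Lemma cont_h (R : realType) : continuous (fun t : R => (1 + expR t)^-1).
Proof.
move=> t; apply: cvgV.
  by rewrite gt_eqF // ltr_wpDr ?expR_ge0.
apply: cvgD; first exact: cvg_cst.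
exact: continuous_expR.
Qed.

Lemma meas_dot (R : realType) (d : nat) (u : d.-tuple R) :
  measurable_fun setT (fun b : d.-tuple R => dotR u b).
Proof.
rewrite /dotR; apply: measurable_sum => k.
apply: measurable_realfun.measurable_funM; first exact: measurable_cst.
exact: measurable_tnth.
Qed.

Lemma meas_h_dot (R : realType) (d : nat) (u : d.-tuple R) :
  measurable_fun setT (fun b : d.-tuple R => (1 + expR (dotR u b))^-1).
Proof.
apply: (measurableT_comp (f := fun t : R => (1 + expR t)^-1)).
  exact: continuous_measurable_fun (cont_h R).
exact: meas_dot.
Qed.

Lemma cont_g (R : realType) : continuous (fun t : R => expR t / (1 + expR t)).
Proof.
move=> t; apply: cvgM; first exact: continuous_expR.
exact: cont_h.
Qed.

Lemma meas_lik (R : realType) (d n : nat) (x : 'I_n -> d.-tuple R) :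
  measurable_fun setT (fun b : d.-tuple R => logit_lik x b).
Proof.
rewrite /logit_lik; apply: measurable_prod => i _; exact: meas_h_dot.
Qed.

Lemma meas_zcv (R : realType) (d n : nat) (x : 'I_n -> d.-tuple R) j :
  measurable_fun setT (fun b : d.-tuple R => zcv x j b).
Proof.
rewrite /zcv; apply: measurable_realfun.measurable_funM; first exact: measurable_cst.
apply: measurable_sum => i.
apply: measurable_realfun.measurable_funM; first exact: measurable_cst.
apply: (measurableT_comp (f := fun t : R => expR t / (1 + expR t))).
  exact: continuous_measurable_fun (cont_g R).
exact: meas_dot.
Qed.

Lemma lik_ge0 (R : realType) (d n : nat) (x : 'I_n -> d.-tuple R) b :
  0 <= logit_lik x b.
Proof.
rewrite /logit_lik; apply: prodr_ge0 => i _.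
by rewrite invr_ge0 addr_ge0 ?expR_ge0.
Qed.

Lemma zcv_bound (R : realType) (d n : nat) (x : 'I_n -> d.-tuple R) j b :
  `|zcv x j b| <= 2^-1 * \sum_(i < n) `|tnth (x i) j|.
Proof.
rewrite /zcv normrM (ger0_norm (x := 2^-1)) ?invr_ge0 ?ler0n //.
apply: ler_wpM2l; first by rewrite invr_ge0 ler0n.
apply: (le_trans (ler_norm_sum _ _ _)); apply: ler_sum => i _.
rewrite normrM; apply: ler_piMr; first exact: normr_ge0.
have hp : 0 < 1 + expR (dotR (x i) b) by rewrite ltr_wpDr ?expR_ge0.
rewrite ger0_norm ?divr_ge0 ?expR_ge0 ?ltW //.
by rewrite ltr_pdivrMr // mul1r ltrDr ltr01.
Qed.

Theorem mainTheorem8 (R : realType) (d n : nat)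
  (mu : {measure set (d.-tuple R) -> \bar R})
  (x : 'I_n -> d.-tuple R) (delta : R) (j : 'I_d) :
  is_lebesgue_Rd mu ->
  (forall i, x i != [tuple of nseq d 0]) ->
  (\int[mu]_beta (logit_lik x beta)%:E < +oo)%E ->
  0 < delta ->
  (\int[mu]_beta ((`|zcv x j beta| `^ (2 + delta)) * logit_post mu x beta)%:E
     < +oo)%E.
Proof.
move=> _ _ hI hdel.
set C := 2^-1 * \sum_(i < n) `|tnth (x i) j|.
set Z := logit_Z mu x.
have hZ : 0 <= Z^-1.
  rewrite invr_ge0 /Z /logit_Z; apply: fine_ge0.
  by apply: integral_ge0 => b _; rewrite lee_fin lik_ge0.
have hp : 0 <= 2 + delta by rewrite addr_ge0 // ltW.
have hC : 0 <= C.
  by rewrite /C mulr_ge0 ?invr_ge0 ?ler0n // sumr_ge0 // => i _; rewrite normr_ge0.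
set K := C `^ (2 + delta) * Z^-1.
have hK : 0 <= K by rewrite /K mulr_ge0 // powR_ge0.
apply: (@le_lt_trans _ _ (\int[mu]_beta (K%:E * (logit_lik x beta)%:E))%E).
  apply: ge0_le_integral => //.
  - move=> b _; rewrite lee_fin /logit_post mulr_ge0 ?powR_ge0 //.
    by rewrite mulr_ge0 // lik_ge0.
  - apply/measurable_EFinP.
    apply: measurable_realfun.measurable_funM.
      apply: (measurableT_comp (f := fun t : R => t `^ (2 + delta))).
        exact: measurable_powR.
      apply: (measurableT_comp (f := fun t : R => `|t|)).
        exact: normr_measurable.
      exact: meas_zcv.
    rewrite /logit_post; apply: measurable_realfun.measurable_funM.
      exact: meas_lik.
    exact: measurable_cst.
  - apply: emeasurable_funM; first exact: measurable_cst.
    by apply/measurable_EFinP; exact: meas_lik.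
  - move=> b _; rewrite -EFinM lee_fin /logit_post /K.
    rewrite -/Z -!mulrA (mulrC (logit_lik x b)).
    apply: ler_wpM2r; first by rewrite mulr_ge0 // lik_ge0.
    apply: ge0_ler_powR; first exact: hp.
    + by rewrite nnegrE normr_ge0.
    + by rewrite nnegrE.
    exact: zcv_bound.
rewrite ge0_integralZl_EFin //.
- apply: lte_mul_pinfty => //; by rewrite lee_fin.
- by move=> b _; rewrite lee_fin lik_ge0.
- by apply/measurable_EFinP; exact: meas_lik.
Qed.
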